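(* Let $(X,T)$ be a topological dynamical system. If $(X,T)$ is multi-sensitive then it is thickly sensitive. If moreover $(X,T)$ is topologically transitive, then $(X,T)$ is thickly sensitive if and only if it is multi-sensitive.
   Context: A topological dynamical system $(X,T)$: $(X,\varrho)$ compact metric, $T:X\to X$ continuous surjection. For opene (open nonempty) $U\subset X$ and $\delta>0$, $S_T(U,\delta)=\{n\in\mathbb{N}:\exists x_1,x_2\in U,\ \varrho(T^nx_1,T^nx_2)>\delta\}$. A set $\mathcal S\subset\mathbb N$ is thick if for each $k$ there is $n_k$ with $\{n_k,\dots,n_k+k\}\subset\mathcal S$. $(X,T)$ is thickly sensitive if there is $\delta>0$ with $S_T(U,\delta)$ thick for every opene $U$; multi-sensitive if there is $\delta>0$ such that $\bigcap_{i=1}^k S_T(U_i,\delta)\neq\varnothing$ for every finite collection $U_1,\dots,U_k$ of opene subsets. $(X,T)$ is transitive if for all opene $U_1,U_2$ there is $n\in\mathbb N$ with $U_1\cap T^{-n}U_2\ne\varnothing$. *)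

(* Defs.v *)
From Stdlib Require Import Reals List.
Open Scope R_scope.

Record is_metric (X : Type) (d : X -> X -> R) : Prop := {
  metric_nonneg : forall x y, 0 <= d x y;
  metric_refl : forall x, d x x = 0;
  metric_sep : forall x y, d x y = 0 -> x = y;
  metric_sym : forall x y, d x y = d y x;
  metric_tri : forall x y z, d x z <= d x y + d y z
}.

Definition is_open {X : Type} (d : X -> X -> R) (U : X -> Prop) : Prop :=
  forall x, U x -> exists eps, 0 < eps /\ forall y, d x y < eps -> U y.

Definition opene {X : Type} (d : X -> X -> R) (U : X -> Prop) : Prop :=
  is_open d U /\ exists x, U x.

Definition is_compact {X : Type} (d : X -> X -> R) : Prop :=
  forall (I : Type) (F : I -> X -> Prop),
    (forall i, is_open d (F i)) ->
    (forall x, exists i, F i x) ->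
    exists l : list I, forall x, exists i, In i l /\ F i x.

Definition is_continuous {X : Type} (d : X -> X -> R) (T : X -> X) : Prop :=
  forall x eps, 0 < eps ->
    exists del, 0 < del /\ forall y, d x y < del -> d (T x) (T y) < eps.

Definition is_surjective {X : Type} (T : X -> X) : Prop :=
  forall y, exists x, T x = y.

Definition TDS {X : Type} (d : X -> X -> R) (T : X -> X) : Prop :=
  is_metric X d /\ is_compact d /\ is_continuous d T /\ is_surjective T.

Definition S_T {X : Type} (d : X -> X -> R) (T : X -> X)
  (U : X -> Prop) (delta : R) (n : nat) : Prop :=
  (1 <= n)%nat /\
  exists x1 x2, U x1 /\ U x2 /\ d (Nat.iter n T x1) (Nat.iter n T x2) > delta.

Definition thick (S : nat -> Prop) : Prop :=
  forall k : nat, exists nk : nat, forall j : nat, (j <= k)%nat -> S (nk + j)%nat.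

Definition thickly_sensitive {X : Type} (d : X -> X -> R) (T : X -> X) : Prop :=
  exists delta, 0 < delta /\
    forall U, opene d U -> thick (S_T d T U delta).

Definition multi_sensitive {X : Type} (d : X -> X -> R) (T : X -> X) : Prop :=
  exists delta, 0 < delta /\
    forall Us : list (X -> Prop),
      Us <> nil ->
      (forall U, In U Us -> opene d U) ->
      exists n, forall U, In U Us -> S_T d T U delta n.

Definition transitive {X : Type} (d : X -> X -> R) (T : X -> X) : Prop :=
  forall U1 U2, opene d U1 -> opene d U2 ->
    exists n : nat, (1 <= n)%nat /\ exists x, U1 x /\ U2 (Nat.iter n T x).

(* Main.v *)
Require Import Defs.
From Stdlib Require Import Reals List.
From Stdlib Require Import Lra Lia Arith.
Open Scope R_scope.

Lemma cont_comp {X} (d : X -> X -> R) f g :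
  is_continuous d f -> is_continuous d g -> is_continuous d (fun x => g (f x)).
Proof.
  intros Hf Hg x eps He.
  destruct (Hg (f x) eps He) as [d1 [Hd1 H1]].
  destruct (Hf x d1 Hd1) as [d2 [Hd2 H2]].
  exists d2; split; auto.
Qed.

Lemma cont_iter {X} (d : X -> X -> R) T n :
  is_continuous d T -> is_continuous d (Nat.iter n T).
Proof.
  intros HT; induction n.
  - intros x eps He; exists eps; split; auto.
  - apply (cont_comp d (Nat.iter n T) T IHn HT).
Qed.

Lemma surj_iter {X} (T : X -> X) n :
  is_surjective T -> forall y, exists x, Nat.iter n T x = y.
Proof.
  intros HT; induction n; intros y.
  - exists y; reflexivity.
  - destruct (HT y) as [z Hz]. destruct (IHn z) as [x Hx].
    exists x; simpl; rewrite Hx; auto.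
Qed.

Lemma open_pre {X} (d : X -> X -> R) f U :
  is_continuous d f -> is_open d U -> is_open d (fun x => U (f x)).
Proof.
  intros Hf HU x Hx.
  destruct (HU _ Hx) as [e [He H]].
  destruct (Hf x e He) as [del [Hdel H2]].
  exists del; split; auto.
Qed.

Lemma open_inter {X} (d : X -> X -> R) U V :
  is_open d U -> is_open d V -> is_open d (fun x => U x /\ V x).
Proof.
  intros HU HV x [Hu Hv].
  destruct (HU _ Hu) as [e1 [He1 H1]].
  destruct (HV _ Hv) as [e2 [He2 H2]].
  exists (Rmin e1 e2); split.
  - apply Rmin_glb_lt; auto.
  - intros y Hy; split; [apply H1 | apply H2];
      eapply Rlt_le_trans; eauto; [apply Rmin_l | apply Rmin_r].
Qed.

Lemma small_ball {X} (d : X -> X -> R) T (x0 : X) e :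
  is_continuous d T -> 0 < e -> forall k,
  exists r, 0 < r /\ forall y, d x0 y < r -> forall i, (i <= k)%nat ->
    d (Nat.iter i T x0) (Nat.iter i T y) < e.
Proof.
  intros HT He; induction k.
  - exists e; split; auto. intros y Hy i Hi. replace i with 0%nat by lia. exact Hy.
  - destruct IHk as [r [Hr H]].
    destruct (cont_iter d T (S k) HT x0 e He) as [del [Hdel H2]].
    exists (Rmin r del); split. apply Rmin_glb_lt; auto.
    intros y Hy i Hi.
    destruct (Nat.eq_dec i (S k)) as [->|Hne].
    + apply H2. eapply Rlt_le_trans; eauto; apply Rmin_r.
    + apply H; [eapply Rlt_le_trans; eauto; apply Rmin_l | lia].
Qed.

Lemma part1 {X} (d : X -> X -> R) T :
  TDS d T -> multi_sensitive d T -> thickly_sensitive d T.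
Proof.
  intros [Hm [_ [HT Hs]]] [delta [Hdelta HM]].
  exists delta; split; auto.
  intros U [HUo [x0 Hx0]] k.
  destruct (small_ball d T x0 (delta/2) HT ltac:(lra) k) as [r [Hr Hball]].
  set (V := fun y => d x0 y < r).
  set (Us := V :: map (fun j => fun x => U (Nat.iter j T x)) (seq 0 (S k))).
  assert (Hne : Us <> nil) by discriminate.
  assert (Hop : forall W, In W Us -> opene d W).
  { intros W [<-|HW].
    - split.
      + intros y Hy. exists (r - d x0 y); split. unfold V in Hy; lra.
        intros z Hz. unfold V in *. pose proof (metric_tri _ _ Hm x0 y z). lra.
      + exists x0. unfold V. rewrite (metric_refl _ _ Hm). auto.
    - apply in_map_iff in HW. destruct HW as [j [<- _]]. split.
      + apply open_pre; auto. apply cont_iter; auto.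
      + destruct (surj_iter T j Hs x0) as [x Hx]. exists x. rewrite Hx. auto. }
  destruct (HM Us Hne Hop) as [n Hn].
  assert (Hnk : (k < n)%nat).
  { destruct (Hn V (or_introl eq_refl)) as [H1 [y1 [y2 [Hy1 [Hy2 Hd]]]]].
    destruct (le_lt_dec n k) as [Hle|]; auto. exfalso.
    pose proof (Hball y1 Hy1 n Hle) as Q1. pose proof (Hball y2 Hy2 n Hle) as Q2.
    pose proof (metric_tri _ _ Hm (Nat.iter n T y1) (Nat.iter n T x0) (Nat.iter n T y2)) as Q3.
    rewrite (metric_sym _ _ Hm (Nat.iter n T y1) (Nat.iter n T x0)) in Q3. lra. }
  exists (n - k)%nat. intros j' Hj'.
  assert (Hin : In (fun x => U (Nat.iter (k - j') T x)) Us).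
  { right. apply in_map_iff. exists (k - j')%nat; split; auto. apply in_seq. lia. }
  destruct (Hn _ Hin) as [_ [x1 [x2 [H1 [H2 Hd]]]]].
  split. lia.
  exists (Nat.iter (k - j') T x1), (Nat.iter (k - j') T x2).
  split; auto. split; auto.
  rewrite <- !Nat.iter_add. replace (n - k + j' + (k - j'))%nat with n by lia. exact Hd.
Qed.

Lemma chain {X} (d : X -> X -> R) T :
  is_continuous d T -> transitive d T ->
  forall Us : list (X -> Prop), (forall U, In U Us -> opene d U) ->
  forall W, opene d W ->
  exists V K, opene d V /\ (forall x, V x -> W x) /\
    forall U, In U Us -> exists t, (t <= K)%nat /\ forall x, V x -> U (Nat.iter t T x).
Proof.
  intros HT Htr Us. induction Us as [|U Us IH]; intros HUs W HW.
  - exists W, 0%nat. split; auto. split; auto. intros U [].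
  - assert (HU : opene d U) by (apply HUs; left; auto).
    destruct (Htr W U HW HU) as [t [_ [x [Hx1 Hx2]]]].
    set (W' := fun y => W y /\ U (Nat.iter t T y)).
    assert (HW' : opene d W').
    { split. apply open_inter. apply HW. apply open_pre. apply cont_iter; auto. apply HU.
      exists x; split; auto. }
    destruct (IH (fun U' H => HUs U' (or_intror H)) W' HW') as [V [K [HV [Hsub HK]]]].
    exists V, (Nat.max t K). split; auto. split.
    + intros y Hy; apply Hsub; auto.
    + intros U' [<-|Hin].
      * exists t; split. lia. intros y Hy. apply (Hsub y Hy).
      * destruct (HK U' Hin) as [t' [Ht' H']]. exists t'; split; auto. lia.
Qed.

Lemma part2 {X} (d : X -> X -> R) T :
  TDS d T -> transitive d T -> thickly_sensitive d T -> multi_sensitive d T.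
Proof.
  intros [Hm [_ [HT Hs]]] Htr [delta [Hdelta HTS]].
  exists delta; split; auto.
  intros Us Hne Hop.
  destruct Us as [|W Us']; [congruence|].
  destruct (chain d T HT Htr (W :: Us') Hop W (Hop W (or_introl eq_refl)))
    as [V [K [HV [_ HK]]]].
  destruct (HTS V HV K) as [a Ha].
  exists a. intros U HU.
  destruct (HK U HU) as [t [Ht HtU]].
  destruct (Ha t Ht) as [_ [x1 [x2 [H1 [H2 Hd]]]]].
  destruct (Ha 0%nat (Nat.le_0_l _)) as [Ha1 _].
  split. lia.
  exists (Nat.iter t T x1), (Nat.iter t T x2). split; auto. split; auto.
  rewrite <- !Nat.iter_add. exact Hd.
Qed.

Theorem proposition3p2 (X : Type) (d : X -> X -> R) (T : X -> X) :
  TDS d T ->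
  (multi_sensitive d T -> thickly_sensitive d T) /\
  (transitive d T -> (thickly_sensitive d T <-> multi_sensitive d T)).
Proof.
  intros H. split.
  - apply part1; auto.
  - intros Htr; split.
    + apply part2; auto.
    + apply part1; auto.
Qed.
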